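(* For any real matrix $A\in\mathbf{R}^{2n\times 2m}$ there exists a unique bimatrix $\{A_1,A_2\}$ with $A_1,A_2\in\mathbf{C}^{n\times m}$ such that $\{A_1,A_2\}_\circ=A$. Moreover, $A_1$ and $A_2$ are given by $$\begin{bmatrix}A_1\\ A_2\end{bmatrix}=H_nAH_m^{\mathrm H}\begin{bmatrix}I_m\\ 0_{m\times m}\end{bmatrix}.$$
   Context: $P^{\#}$ and $P^{\mathrm H}$ denote entrywise conjugate and conjugate transpose; $\mathrm{j}$ is the imaginary unit. For $A_1,A_2\in\mathbf{C}^{n\times m}$ the bimatrix $\{A_1,A_2\}$ is the real-linear map $\mathbf{C}^m\to\mathbf{C}^n$, $x\mapsto A_1x+A_2^{\#}x^{\#}$; two bimatrices are equal iff they agree as maps (equivalently, iff the defining pairs coincide). Its real representation is $\{A_1,A_2\}_\circ=\begin{bmatrix}\mathrm{Re}(A_1+A_2) & -\mathrm{Im}(A_1+A_2)\\ \mathrm{Im}(A_1-A_2) & \mathrm{Re}(A_1-A_2)\end{bmatrix}\in\mathbf{R}^{2n\times 2m}$. For each $k$, $H_k=\frac{1}{\sqrt2}\begin{bmatrix}I_k & \mathrm{j}I_k\\ I_k & -\mathrm{j}I_k\end{bmatrix}$. *)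

(* Defs.v *)
From HB Require Import structures.
From mathcomp Require Import all_boot all_order all_algebra.
From mathcomp Require Import complex.
Set Implicit Arguments. Unset Strict Implicit. Unset Printing Implicit Defensive.
Import Order.TTheory GRing.Theory Num.Theory.
Local Open Scope ring_scope.
Local Open Scope complex_scope.

(* Complex numbers are R[i] = complex R over a real closed field R
   (R = the reals is the case of the paper). *)

Definition mxRe (R : rcfType) (n m : nat) (M : 'M[R[i]]_(n, m)) : 'M[R]_(n, m) :=
  map_mx (@complex.Re R) M.
Definition mxIm (R : rcfType) (n m : nat) (M : 'M[R[i]]_(n, m)) : 'M[R]_(n, m) :=
  map_mx (@complex.Im R) M.
Definition mxconj (R : rcfType) (n m : nat) (M : 'M[R[i]]_(n, m)) : 'M[R[i]]_(n, m) :=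
  map_mx (@conjc R) M.
Definition mxH (R : rcfType) (n m : nat) (M : 'M[R[i]]_(n, m)) : 'M[R[i]]_(m, n) :=
  (mxconj M)^T.

Definition mxC (R : rcfType) (n m : nat) (M : 'M[R]_(n, m)) : 'M[R[i]]_(n, m) :=
  map_mx (fun x : R => x%:C) M.

Definition bimx_apply (R : rcfType) (n m : nat) (A1 A2 : 'M[R[i]]_(n, m))
  (x : 'cV[R[i]]_m) : 'cV[R[i]]_n :=
  A1 *m x + mxconj A2 *m mxconj x.

(* real representation {A1,A2}_o  in R^{2n x 2m} (2n written n + n) *)
Definition bimx_real (R : rcfType) (n m : nat) (A1 A2 : 'M[R[i]]_(n, m))
  : 'M[R]_(n + n, m + m) :=
  block_mx (mxRe (A1 + A2)) (- mxIm (A1 + A2))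
           (mxIm (A1 - A2)) (mxRe (A1 - A2)).

Definition Hmx (R : rcfType) (k : nat) : 'M[R[i]]_(k + k) :=
  ((Num.sqrt (2 : R))%:C)^-1 *:
    block_mx (1%:M : 'M[R[i]]_k) ('i%:M) (1%:M) ((- 'i)%:M).

(* Main.v *)
Require Import Defs.
From HB Require Import structures.
From mathcomp Require Import all_boot all_order all_algebra.
From mathcomp Require Import complex.
From mathcomp Require Import ring.
Import GRing.Theory Num.Theory.
Local Open Scope ring_scope.
Local Open Scope complex_scope.

Lemma trZ (T : pzRingType) p q (a : T) (M : 'M[T]_(p,q)) : (a *: M)^T = a *: M^T.
Proof. by apply/matrixP => i j; rewrite !mxE. Qed.

Lemma c2 (R : rcfType) : ((Num.sqrt (2:R))%:C)^-1 * ((Num.sqrt (2:R))%:C)^-1 = (2^-1 : R)%:C.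
Proof.
have h : 0 < Num.sqrt (2:R) by rewrite sqrtr_gt0 ltr0n.
have h' : Num.sqrt (2:R) != 0 by rewrite lt0r_neq0.
rewrite -invrM ?unitfE; last first.
- by apply/eqP => -[]; apply/eqP.
- by apply/eqP => -[]; apply/eqP.
by rewrite -rmorphM -expr2 sqr_sqrtr ?ler0n // fmorphV.
Qed.

Lemma formula (R : rcfType) (n m : nat) (A1 A2 : 'M[R[i]]_(n, m)) :
     col_mx A1 A2 =
       Hmx R n *m mxC (bimx_real A1 A2) *m mxH (Hmx R m) *m col_mx (1%:M : 'M[R[i]]_m) 0.
Proof.
rewrite /Hmx /mxH /mxconj /bimx_real /mxC.
set c := ((Num.sqrt (2:R))%:C)^-1.
have cc : conjc c = c by rewrite /c conjc_inv conjc_real.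
rewrite !map_mxZ trZ.
rewrite -[X in X *: (_ ^T)]/(c^*) cc.
rewrite !map_block_mx !tr_block_mx !map_mx1 !map_scalar_mx.
rewrite !trmx1 !tr_scalar_mx.
rewrite -!mulmxA -!scalemxAl -!scalemxAr scalerA.
rewrite [X in _ *m (_ *m X)]mul_block_col.
rewrite !mulmx1 !mulmx0 !addr0.
rewrite [X in _ *m X]mul_block_col.
rewrite mul_block_col.
rewrite !mul1mx !mulmx1 !mul_mx_scalar !mul_scalar_mx.
have e : c * c = (2^-1 : R)%:C by exact: c2.
rewrite e scale_col_mx; congr col_mx; apply/matrixP => i j; rewrite !mxE;
  case: (A1 i j) (A2 i j) => [a b] [x y]; apply/eqP; rewrite eq_complex /=;
  apply/andP; split; apply/eqP; field; rewrite ?pnatr_eq0 //.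
Qed.

Theorem lemma4 (R : rcfType) (n m : nat) (A : 'M[R]_(n + n, m + m)) :
  (exists A1 A2 : 'M[R[i]]_(n, m),
     bimx_real A1 A2 = A /\
     (forall B1 B2 : 'M[R[i]]_(n, m),
        bimx_real B1 B2 = A -> bimx_apply B1 B2 =1 bimx_apply A1 A2))
  /\
  (forall A1 A2 : 'M[R[i]]_(n, m),
     bimx_real A1 A2 = A ->
     col_mx A1 A2 =
       Hmx R n *m mxC A *m mxH (Hmx R m) *m col_mx (1%:M : 'M[R[i]]_m) 0).
Proof.
split; last by move=> A1 A2 <-; exact: formula.
pose P := ulsubmx A; pose Q := ursubmx A; pose S := dlsubmx A; pose T := drsubmx A.
pose A1 := \matrix_(i, j) (Complex ((P i j + T i j) / 2) ((S i j - Q i j) / 2)).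
pose A2 := \matrix_(i, j) (Complex ((P i j - T i j) / 2) (- (Q i j + S i j) / 2)).
have hA : bimx_real A1 A2 = A.
  rewrite -[RHS](submxK A) /bimx_real; congr block_mx; apply/matrixP => i j;
  rewrite !mxE /= -/P -/Q -/S -/T; field; rewrite ?pnatr_eq0 //.
exists A1, A2; split => // B1 B2 hB.
have := @formula R n m B1 B2; rewrite hB -hA -formula.
by case/eq_col_mx => -> ->.
Qed.
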